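(* Let $k\in\mathbb Z_{>0}$. For $0\le l\le k$ and $N\ge1$, $$d^{(N+1)}_{k,l}(0)=\sum_{l'=0}^k\mathcal D^{l'}_l\,d^{(N)}_{k,l'}(0),\qquad d^{(1)}_{k,l}(0)=l+1,$$ where $\mathcal D^{l'}_l=(\min(l,k-l')+1)\cdot(\min(l',k-l)+1)$.
   Context: The level $k$ Verlinde algebra $\mathcal V_k$ has basis $\pi_0,\dots,\pi_k$ and product $\pi_l\pi_{l'}=\sum_i\pi_i$, the sum over $|l-l'|\le i\le\min(2k-l-l',l+l')$ with $i+l-l'$ even. The integers $d^{(N)}_{k,l}(0)$ are defined by $(\pi_0+2\pi_1+\cdots+(k+1)\pi_k)^N=\sum_{l=0}^kd^{(N)}_{k,l}(0)\pi_l$. *)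

(* Defs.v *)
From mathcomp Require Import all_boot all_order all_algebra.
Set Implicit Arguments. Unset Strict Implicit. Unset Printing Implicit Defensive.
Import GRing.Theory Num.Theory.
Local Open Scope ring_scope.

(* Elements of the level-k Verlinde algebra V_k: integer coefficient vectors
   on the basis pi_0, ..., pi_k, indexed by 'I_k.+1. *)
Definition verl (k : nat) := {ffun 'I_k.+1 -> int}.

Definition vstruct (k l l' i : nat) : bool :=
  [&& (maxn l l' - minn l l' <= i)%N,
      (i <= minn (2 * k - l - l') (l + l'))%N &
      ~~ odd (i + l + l')].

Definition vpi (k : nat) (j : 'I_k.+1) : verl k := [ffun i => (i == j)%:R].

Definition vmul (k : nat) (x y : verl k) : verl k :=
  [ffun i : 'I_k.+1 => \sum_(l < k.+1) \sum_(l' < k.+1)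
      x l * y l' *+ vstruct k l l' i].

Definition vsum (k : nat) : verl k := [ffun l : 'I_k.+1 => (l.+1)%:Z].

Definition vpow (k : nat) (x : verl k) (N : nat) : verl k :=
  iter N (fun y => vmul y x) (vpi ord0).

Definition dcoef (k N : nat) (l : 'I_k.+1) : int := vpow (vsum k) N l.

Definition Dmat (k l l' : nat) : int :=
  ((minn l (k - l')).+1 * (minn l' (k - l)).+1)%:Z.
Arguments dcoef k N l : clear implicits.
Arguments Dmat k l l' : clear implicits.

(* Main.v *)
Require Import Defs.
From mathcomp Require Import all_boot all_order all_algebra zify.
Import GRing.Theory Num.Theory.

Lemma oddE m : odd m = (m %% 2 == 1)%N.
Proof. by rewrite modn2; case: (odd m). Qed.

Lemma dist_le x y z : ((maxn x y - minn x y <= z) = (x <= y + z) && (y <= x + z))%N.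
Proof. case: (leqP x y) => h; apply/idP/andP; [move=> h1; split|case=> h1 h2|move=> h1; split|case=> h1 h2]; lia. Qed.

Lemma hiE k a i : (a <= k -> i <= k ->
  (maxn a i - minn a i) + 2 * minn (minn i (k-a)) (minn a (k-i)) = minn (a + i) (2 * k - a - i))%N.
Proof.
move=> ha hi; case: (leqP (a + i) k) => h.
  have -> : minn i (k - a) = i by apply/minn_idPl; lia.
  have -> : minn a (k - i) = a by apply/minn_idPl; lia.
  have -> : minn (a + i) (2 * k - a - i) = a + i by apply/minn_idPl; lia.
  case: (leqP a i) => h2; lia.
have -> : minn i (k - a) = k - a by apply/minn_idPr; lia.
have -> : minn a (k - i) = k - i by apply/minn_idPr; lia.
have -> : minn (a + i) (2 * k - a - i) = 2 * k - a - i by apply/minn_idPr; lia.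
case: (leqP a i) => h2; case: (leqP (k - a) (k - i)) => h3; lia.
Qed.

Lemma sub3 k a b i : (a <= k -> b <= k -> i <= k -> (i <= 2 * k - a - b) = (b <= 2 * k - a - i))%N.
Proof. move=> *; apply/idP/idP => h; lia. Qed.

Lemma rng k a b i : (a <= k -> i <= k -> b <= k ->
  (maxn a b - minn a b <= i) && (i <= minn (2 * k - a - b) (a + b)) =
  (maxn a i - minn a i <= b) && (b <= (maxn a i - minn a i) + 2 * minn (minn i (k-a)) (minn a (k-i))))%N.
Proof.
move=> ha hi hb; rewrite hiE // !leq_min !dist_le sub3 // (addnC b i) (addnC a b).
by case: (a <= i + b)%N; case: (b <= a + i)%N; case: (i <= b + a)%N; case: (b <= 2 * k - a - i)%N.
Qed.

Lemma par a b i : odd (i + a + b) = odd (b + (maxn a i - minn a i)).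
Proof.
have e : (a + i = (maxn a i - minn a i) + (minn a i).*2)%N by rewrite -addnn; lia.
have -> : (i + a + b = b + (a + i))%N by lia.
by rewrite e addnA oddD odd_double addbF.
Qed.

Lemma vstructE k a b i : (a <= k -> b <= k -> i <= k ->
  vstruct k a b i = [&& maxn a i - minn a i <= b,
     b <= (maxn a i - minn a i) + 2 * minn (minn i (k-a)) (minn a (k-i)) &
     ~~ odd (b + (maxn a i - minn a i))])%N.
Proof.
move=> ha hb hi; by rewrite /vstruct -par andbA rng // -andbA.
Qed.

Lemma minmax_prod p q : ((minn p q).+1 * (maxn p q - minn p q + minn p q).+1 = p.+1 * q.+1)%N.
Proof.
case: (leqP p q) => h; first by rewrite subnK.
by rewrite subnK ?(ltnW h) // mulnC.
Qed.
Lemma DmatE k a i : (a <= k -> i <= k ->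
  (minn (minn i (k-a)) (minn a (k-i))).+1 * ((maxn a i - minn a i) + minn (minn i (k-a)) (minn a (k-i))).+1
  = (minn i (k - a)).+1 * (minn a (k - i)).+1)%N.
Proof.
move=> ha hi; rewrite -(minmax_prod (minn i (k-a))).

suff E : (maxn a i - minn a i = maxn (minn i (k-a)) (minn a (k-i)) - minn (minn i (k-a)) (minn a (k-i)))%N by rewrite E.
case: (leqP (a + i) k) => h.
  have -> : minn i (k - a) = i by apply/minn_idPl; lia.
  have -> : minn a (k - i) = a by apply/minn_idPl; lia.
  by rewrite maxnC minnC.
have -> : minn i (k - a) = k - a by apply/minn_idPr; lia.
have -> : minn a (k - i) = k - i by apply/minn_idPr; lia.
lia.
Qed.

Lemma sum_ap (K lo n : nat) : (lo + 2*n < K)%N ->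
  \sum_(b < K) (b.+1 * [&& lo <= b, b <= lo + 2*n & ~~ odd (b+lo)])%N = (n.+1 * (lo+n).+1)%N.
Proof.
elim: n => [|n IH] H.
  rewrite (bigD1 (Ordinal (H : lo + 2 * 0 < K)%N)) //= big1 ?addn0.
    by rewrite leqnn addnn odd_double muln1 mul1n.
  move=> b /eqP hb.
  have -> : [&& lo <= b, b <= lo + 2*0 & ~~ odd (b+lo)] = false.
    apply/negbTE; apply/negP => /and3P[h1 h2 _]; apply: hb; apply: val_inj => /=; lia.
  by rewrite muln0.
have H' : (lo + 2 * n < K)%N by lia.
have E : forall b : 'I_K, ((b.+1 * [&& lo <= b, b <= lo + 2*n.+1 & ~~ odd (b+lo)])
   = b.+1 * [&& lo <= b, b <= lo + 2*n & ~~ odd (b+lo)] + b.+1 * (b == lo + 2 * n.+1 :> nat))%N.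
  move=> b; rewrite -mulnDr; congr (_ * _)%N.
  rewrite !oddE.
  case: (lo <= b)%N / leP => h1 /=; last by case: eqP => //; lia.
  case: (b <= lo + 2 * n)%N / leP => h2 /=.
    have -> : (b <= lo + 2 * n.+1)%N by lia.
    by case: eqP => //; lia.
  case: (b <= lo + 2 * n.+1)%N / leP => h3 /=; last by case: eqP => //; lia.
  have [hc|hc] : (nat_of_ord b = lo + 2 * n + 1 \/ nat_of_ord b = lo + 2 * n.+1)%N by lia.
    rewrite hc; have -> : (lo + 2 * n + 1 + lo) %% 2 = 1 by lia. by rewrite /= add0n; case: eqP => //; lia.
  rewrite hc eqxx; have -> : (lo + 2 * n.+1 + lo) %% 2 = 0 by lia. by [].
rewrite (eq_bigr _ (fun b _ => E b)) big_split /= IH //.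
rewrite (bigD1 (Ordinal (H : lo + 2 * n.+1 < K)%N)) //= eqxx muln1 big1 ?addn0.
  lia.
move=> b hb; case: eqP => he; last by rewrite muln0. by case/eqP: hb; apply: val_inj.
Qed.

Local Open Scope ring_scope.
Lemma key k (a i : 'I_k.+1) :
  \sum_(b < k.+1) (vsum k b *+ vstruct k a b i) = Dmat k i a.
Proof.
have ha := ltn_ord a; have hi := ltn_ord i.
rewrite /Dmat -(DmatE k a i) //.
rewrite -(sum_ap k.+1); last by lia.
rewrite -natz natr_sum.
apply: eq_bigr => b _; have hb := ltn_ord b; rewrite ffunE vstructE //; try lia.
Qed.
Theorem lemma3p2p1 (k : nat) (hk : (0 < k)%N) :
  (forall (N : nat), (1 <= N)%N -> forall l : 'I_k.+1,
     dcoef k N.+1 l = \sum_(l' < k.+1) Dmat k l l' * dcoef k N l') /\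
  (forall l : 'I_k.+1, dcoef k 1 l = (l.+1)%:Z).
Proof.
have step : forall N (l : 'I_k.+1),
    dcoef k N.+1 l = \sum_(l' < k.+1) Dmat k l l' * dcoef k N l'.
  move=> N l; rewrite /dcoef /vpow iterS -/(vpow _ N) /vmul ffunE.
  apply: eq_bigr => a _; rewrite -key mulr_suml; apply: eq_bigr => b _.
  by rewrite -mulrnAr mulrC.
split; first by move=> N _ l; exact: step.
move=> l; rewrite step (bigD1 ord0) //= big1 ?addr0.
  rewrite /dcoef /vpow /= /vpi ffunE eqxx mulr1 /Dmat /=.
  have hl := ltn_ord l; congr Posz; lia.
move=> a ha; rewrite /dcoef /vpow /= /vpi ffunE.
by rewrite (negbTE ha) mulr0.
Qed.
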